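(* Let $c\ge1$, $\eta=1+2\log c$, $V(k)=k^2-2\log k$ for $k>0$, and let $k_{\min}\le 1$ be the unique $k\le1$ with $V(k)=\eta$. Let $k_{\min}\le k_1<1$ and $0<k_0\le k_1$, and put $\bar V(k)=(1+\frac1{k_0})(k-1)^2+H$ where $H$ is chosen so that $\bar V(k_1)=V(k_1)$. Then $V(k)>\bar V(k)$ for all $k\in(k_1,1)$, and for every $k_1<k_2\le1$, \[\int_{k_1}^{k_2}\frac{dk}{\sqrt{\eta-V(k)}}>\frac{1}{\sqrt{1+\frac1{k_0}}}\left(\sin^{-1}\Big(\frac{1-k_1}{a}\Big)-\sin^{-1}\Big(\frac{1-k_2}{a}\Big)\right),\qquad a=\sqrt{\frac{\eta-H}{1+\frac1{k_0}}}.\] Moreover, if $k_1=k_{\min}$ then $a=1-k_{\min}$. *)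

(* Defs.v *)
From HB Require Import structures.
From mathcomp Require Import all_boot all_order all_algebra.
From mathcomp Require Import all_classical all_reals all_analysis.
Set Implicit Arguments. Unset Strict Implicit. Unset Printing Implicit Defensive.
Import Order.TTheory GRing.Theory Num.Theory.
Local Open Scope ring_scope.

Definition eta_c {R : realType} (c : R) : R := 1 + 2 * ln c.
Definition Vpot {R : realType} (k : R) : R := k ^+ 2 - 2 * ln k.
Definition Hconst {R : realType} (k0 k1 : R) : R :=
  Vpot k1 - (1 + k0^-1) * (k1 - 1) ^+ 2.
Definition Vbar {R : realType} (k0 k1 k : R) : R :=
  (1 + k0^-1) * (k - 1) ^+ 2 + Hconst k0 k1.
Definition a_const {R : realType} (c k0 k1 : R) : R :=
  Num.sqrt ((eta_c c - Hconst k0 k1) / (1 + k0^-1)).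

(* Main.v *)
Require Import Defs.
From HB Require Import structures.
From mathcomp Require Import all_boot all_order all_algebra.
From mathcomp Require Import all_classical all_reals all_analysis.
From mathcomp Require Import measurable_realfun ftc trigo.
From mathcomp Require Import ring lra.
Import Order.TTheory GRing.Theory Num.Theory.
Import numFieldNormedType.Exports.
Local Open Scope ring_scope.
Local Open Scope classical_set_scope.

Lemma ln_lower {R : realType} (x : R) : 0 < x -> 1 - x^-1 <= ln x.
Proof.
move=> x0.
have h := @le_ln1Dx R (x^-1 - 1).
have : -1 < x^-1 - 1 by have := invr_gt0 x; rewrite x0; lra.
move/h; rewrite addrC subrK lnV ?posrE //; lra.
Qed.

Lemma Vpot_decr {R : realType} (x y : R) : 0 < x -> x < y -> y <= 1 -> Vpot y < Vpot x.
Proof.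
move=> x0 xy y1; rewrite /Vpot.
have y0 : 0 < y by lra.
have hl : 1 - (y / x)^-1 <= ln (y / x) by apply: ln_lower; rewrite divr_gt0.
rewrite ln_div ?posrE // in hl.
rewrite invf_div in hl.
have e : 1 - x / y = (y - x) / y by field; lra.
rewrite e in hl.
have h2 : (y - x) * (2 - y * (x + y)) > 0.
  apply: mulr_gt0; first lra. nra.
set t := (y - x) / y in hl.
have ht : t * y = y - x by rewrite /t divfK //; lra.
have h3 : (y - x) * (y + x) < 2 * t by nra.
lra.
Qed.
Lemma part1 {R : realType} (k0 k1 k : R) : 0 < k0 -> k0 <= k1 -> k1 < k -> k < 1 ->
  Vbar k0 k1 k < Vpot k.
Proof.
move=> k00 k01 k1k k1'.
set K := 1 + k0^-1.
pose d := fun x : R => x ^+ 2 - 2 * ln x - K * (x - 1) ^+ 2.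
pose dd := fun x : R => 2 * x - 2 * x^-1 - 2 * K * (x - 1).
have hder : forall x : R, 0 < x -> is_derive x 1 d (dd x).
  move=> x x0.
  have hl : is_derive x 1 (@ln R) x^-1 := is_derive1_ln x0.
  rewrite /d /dd.
  apply: is_derive_eq.
  by rewrite /GRing.scale /=; ring.
have hd : forall x, x \in `]k1, k[%R -> is_derive x 1 d (dd x).
  move=> x; rewrite in_itv /= => /andP[h _]; apply: hder. lra.
have [xi xiin hxi] : exists2 c, c \in `]k1, k[%R & d k - d k1 = dd c * (k - k1).
  apply: MVT => //.
  apply: derivable_within_continuous => x; rewrite in_itv /= => /andP[h _].
  have x0 : 0 < x by lra.
  by case: (hder x x0).
move: xiin; rewrite in_itv /= => /andP[xi1 xi2].
have xi0 : 0 < xi by lra.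
have e1 : dd xi = 2 * (1 - xi) * (k0^-1 - xi^-1).
  rewrite /dd /K; field; lra.
have e2 : k0^-1 - xi^-1 > 0.
  rewrite subr_gt0 ltf_pV2 ?posrE //; lra.
have e3 : dd xi * (k - k1) > 0.
  rewrite e1; apply: mulr_gt0; last lra.
  apply: mulr_gt0 => //; lra.
rewrite /Vbar /Hconst -/K.
move: hxi e3; rewrite /d /Vpot; lra.
Qed.

Lemma cont_inv_sqrt {R : realType} (h : R -> R) (x : R) :
  continuous_at x h -> 0 < h x ->
  continuous_at x (fun k => 1 / Num.sqrt (h k)).
Proof.
move=> ch hx.
apply: (@continuous_comp _ _ _ h (fun y => 1 / Num.sqrt y)) => //.
have -> : (fun y : R => 1 / Num.sqrt y) = (fun y => (Num.sqrt y)^-1).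
  by apply/funext => y; rewrite div1r.
apply: (@continuous_comp _ _ _ (@Num.sqrt R) (@GRing.inv R)).
  exact: sqrt_continuous.
apply: inv_continuous; rewrite gt_eqF // sqrtr_gt0 //.
Qed.

Lemma cont_etaV {R : realType} (e x : R) : 0 < x -> continuous_at x (fun y => e - Vpot y).
Proof.
move=> x0.
have hl : is_derive x 1 (@ln R) x^-1 := is_derive1_ln x0.
have : derivable (fun y : R => e - Vpot y) x 1.
  rewrite /Vpot; apply: ex_derive.
by move=> /derivable1_diffP/differentiable_continuous.
Qed.

Lemma cont_quad {R : realType} (K b x : R) : continuous_at x (fun y : R => K * (b - (1 - y) ^+ 2)).
Proof.
have : derivable (fun y : R => K * (b - (1 - y) ^+ 2)) x 1.
  apply: ex_derive.
by move=> /derivable1_diffP/differentiable_continuous.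
Qed.


Lemma deriv_F {R : realType} (a s k : R) : 0 < a -> 0 < s -> -1 < (1 - k) / a < 1 ->
  is_derive k 1 (fun y : R => - asin ((1 - y) / a) / s)
    (1 / Num.sqrt (s ^+ 2 * (a ^+ 2 - (1 - k) ^+ 2))).
Proof.
move=> a0 s0 hu.
set u := (1 - k) / a.
have hu1 : is_derive k 1 (fun y : R => (1 - y) / a) (- a^-1).
  apply: is_derive_eq.
  by rewrite /GRing.scale /=; ring.
have has : is_derive ((1 - k) / a) 1 (@asin R) (Num.sqrt (1 - u ^+ 2))^-1 :=
  is_derive1_asin hu.
have hc := @is_derive1_comp R (@asin R) (fun y : R => (1 - y) / a) k _ _ has hu1.
apply: is_derive_eq.
have e : s ^+ 2 * (a ^+ 2 - (1 - k) ^+ 2) = (s * a) ^+ 2 * (1 - u ^+ 2).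
  rewrite /u; field; exact: lt0r_neq0.
have hsq : 0 < Num.sqrt (1 - u ^+ 2).
  rewrite sqrtr_gt0; move: hu; rewrite -/u => /andP[h1 h2]; nra.
rewrite e sqrtrM ?sqr_ge0 // sqrtr_sqr ger0_norm; last by apply: mulr_ge0; lra.
rewrite /GRing.scale /=; field.
apply/and3P; split; apply: lt0r_neq0 => //.
Qed.

Lemma ftc_piece {R : realType} (a s al be : R) : 0 < a -> 0 < s -> al < be ->
  (forall k, al <= k <= be -> -1 < (1 - k) / a < 1) ->
  (\int[@lebesgue_measure R]_(k in `[al, be]) (1 / Num.sqrt (s ^+ 2 * (a ^+ 2 - (1 - k) ^+ 2)))%:E =
   (- asin ((1 - be) / a) / s)%:E - (- asin ((1 - al) / a) / s)%:E)%E.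
Proof.
move=> a0 s0 ab hk.
have pos : forall k, al <= k <= be -> 0 < s ^+ 2 * (a ^+ 2 - (1 - k) ^+ 2).
  move=> k /hk /andP[h1 h2]; apply: mulr_gt0; first exact: exprn_gt0.
  have e := divfK (lt0r_neq0 a0) (1 - k).
  move: h1 h2 e; set u := (1 - k) / a => h1 h2 e.
  rewrite -e exprMn.
  have ha2 : 0 < a ^+ 2 by exact: exprn_gt0.
  have hu2 : u ^+ 2 < 1 by nra.
  nra.
have dF : forall k, al <= k <= be -> is_derive k 1 (fun y : R => - asin ((1 - y) / a) / s)
    (1 / Num.sqrt (s ^+ 2 * (a ^+ 2 - (1 - k) ^+ 2))).
  by move=> k /hk; apply: deriv_F.
apply: (continuous_FTC2 (F := fun y : R => - asin ((1 - y) / a) / s)) => //.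
- apply: continuous_in_subspaceT => x; rewrite inE /= in_itv /= => hx.
  apply: cont_inv_sqrt; first exact: cont_quad.
  exact: pos.
- split.
  + move=> x; rewrite in_itv /= => /andP[h1 h2].
    have /dF [] : al <= x <= be by rewrite !ltW.
    done.
  + apply: cvg_at_right_filter.
    have /dF [] : al <= al <= be by rewrite lexx ltW.
    by move=> /derivable1_diffP/differentiable_continuous.
  + apply: cvg_at_left_filter.
    have /dF [] : al <= be <= be by rewrite lexx ltW.
    by move=> /derivable1_diffP/differentiable_continuous.
- move=> x; rewrite in_itv /= => /andP[h1 h2].
  rewrite derive1E; apply: derive_val; apply: dF; rewrite !ltW //.
Qed.

Lemma lower_bound {R : realType} (a s k1 k2 : R) : 0 < a -> 0 < s -> k1 < k2 -> k2 <= 1 ->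
  1 - k1 <= a ->
  ((1 / s * (asin ((1 - k1) / a) - asin ((1 - k2) / a)))%:E <=
   \int[@lebesgue_measure R]_(k in `]k1, k2[) (1 / Num.sqrt (s ^+ 2 * (a ^+ 2 - (1 - k) ^+ 2)))%:E)%E.
Proof.
move=> hapos hs hk12 hk2 ha.
pose g := fun k : R => 1 / Num.sqrt (s ^+ 2 * (a ^+ 2 - (1 - k) ^+ 2)).
have gpos : forall k, k1 < k -> k < k2 -> 0 < s ^+ 2 * (a ^+ 2 - (1 - k) ^+ 2).
  move=> k h1 h2; apply: mulr_gt0; first exact: exprn_gt0.
  rewrite subr_gt0; nra.
have fgD : forall k, `]k1, k2[ k -> 0 <= g k.
  move=> k; rewrite /= in_itv /= => /andP[h1 h2].
  by rewrite /g div1r invr_ge0 sqrtr_ge0.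
have mg : measurable_fun `]k1, k2[ g.
  apply: open_continuous_measurable_fun; first exact: interval_open.
  move=> k; rewrite inE /= in_itv /= => /andP[h1 h2].
  apply: cont_inv_sqrt; first by apply: cont_quad.
  exact: gpos.
rewrite -/g.
set u1 := (1 - k1) / a.
set u2 := (1 - k2) / a.
have eu1 : u1 * a = 1 - k1 by rewrite /u1 divfK //; exact: lt0r_neq0.
have eu2 : u2 * a = 1 - k2 by rewrite /u2 divfK //; exact: lt0r_neq0.
have hu1 : 0 < u1 <= 1 by apply/andP; split; nra.
have hu2 : 0 <= u2 < u1 by apply/andP; split; nra.
set t1 := asin u1.
set t2 := asin u2.
have ht1 : - (pi / 2) <= t1 <= pi / 2.
  by rewrite asin_geNpi2 ?asin_lepi2 //; apply/andP; split; lra.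
have ht2 : - (pi / 2) <= t2 <= pi / 2.
  by rewrite asin_geNpi2 ?asin_lepi2 //; apply/andP; split; lra.
have st1 : sin t1 = u1 by rewrite /t1 asinK // in_itv /=; apply/andP; split; lra.
have st2 : sin t2 = u2 by rewrite /t2 asinK // in_itv /=; apply/andP; split; lra.
have t12 : t2 < t1.
  rewrite -ltr_sin ?in_itv //= st1 st2; lra.
have Ig0 : (0 <= \int[@lebesgue_measure R]_(k in `]k1, k2[) (g k)%:E)%E.
  by apply: integral_ge0 => k /fgD h; rewrite lee_fin.
have C : forall del, 0 < del -> del < t1 - t2 ->
    (((t1 - del - t2) / s)%:E <= \int[@lebesgue_measure R]_(k in `]k1, k2[) (g k)%:E)%E.
  move=> del d0 d1.
  pose t := t1 - del.
  have et : t = t1 - del by [].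
  have ht : - (pi / 2) <= t <= pi / 2 by apply/andP; split; lra.
  have st_lt : sin t < u1 by rewrite -st1 ltr_sin ?in_itv //=; lra.
  have st_gt : u2 < sin t by rewrite -st2 ltr_sin ?in_itv //=; lra.
  set al := 1 - a * sin t.
  have hal1 : k1 < al.
    have : 0 < a * (u1 - sin t) by apply: mulr_gt0; lra.
    rewrite /al; nra.
  have hal2 : al < k2.
    have : 0 < a * (sin t - u2) by apply: mulr_gt0; lra.
    rewrite /al; nra.
  have eal : (1 - al) / a = sin t by rewrite /al; field; exact: lt0r_neq0.
  have ast : asin ((1 - al) / a) = t by rewrite eal sinK // in_itv /=.
  have hk : forall k, al <= k <= k2 -> -1 < (1 - k) / a < 1.
    move=> k /andP[h1 h2].
    have ek : (1 - k) / a * a = 1 - k by rewrite divfK //; exact: lt0r_neq0.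
    move: ek; set v := (1 - k) / a => ek.
    apply/andP; split; nra.
  have := @ftc_piece R a s al k2 hapos hs hal2 hk.
  rewrite -/g ast => hF.
  apply: (@le_trans _ _ (\int[@lebesgue_measure R]_(k in `]al, k2[) (g k)%:E)%E).
    rewrite -(@integral_itv_bndoo R al k2 (fun k => (g k)%:E) true false).
      rewrite hF -EFinB lee_fin le_eqVlt; apply/orP; left; apply/eqP.
      rewrite -/u2 -/t2 et; field; exact: lt0r_neq0.
    apply/measurable_EFinP; apply: measurable_funS mg => //.
    by apply: subset_itvr; rewrite bnd_simp ltW.
  apply: (ge0_subset_integral (@lebesgue_measure R)) => //.
  - exact/measurable_EFinP.
  - by apply: subset_itvr; rewrite bnd_simp ltW.
move: C Ig0.
move: (\int[_]_(_ in _) (g _)%:E)%E => [r| |] // C Ig0; last by rewrite leey.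
rewrite lee_fin in Ig0; rewrite lee_fin.
set X := 1 / s * (t1 - t2).
have eX : X * s = t1 - t2 by rewrite /X; field; exact: lt0r_neq0.
have X0 : 0 < X by rewrite /X; apply: mulr_gt0; [rewrite div1r invr_gt0 | lra].
rewrite leNgt; apply/negP => hr.
pose del := s * (X - r) / 2.
have ed : del = s * (X - r) / 2 by [].
have d0 : 0 < del by rewrite ed; apply: divr_gt0 => //; apply: mulr_gt0; lra.
have d1 : del < t1 - t2 by rewrite -eX ed; nra.
have := C del d0 d1.
have e2 : (t1 - del - t2) / s = (X + r) / 2.
  apply: (@mulIf _ s); first exact: lt0r_neq0.
  rewrite divfK; last exact: lt0r_neq0.
  rewrite ed; nra.
rewrite e2 lee_fin; lra.
Qed.

Lemma part2 {R : realType} (c kmin k0 k1 k2 : R)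
  (hkmin_pos : 0 < kmin) (hkmin : Vpot kmin = eta_c c)
  (hk1 : kmin <= k1) (hk1' : k1 < 1) (hk0 : 0 < k0) (hk01 : k0 <= k1)
  (hk12 : k1 < k2) (hk2 : k2 <= 1) :
  (((1 / Num.sqrt (1 + k0^-1)) *
        (asin ((1 - k1) / a_const c k0 k1) - asin ((1 - k2) / a_const c k0 k1)))%:E
     < (\int[@lebesgue_measure R]_(k in `]k1, k2[)
          (1 / Num.sqrt (eta_c c - Vpot k))%:E))%E.
Proof.
set eta := eta_c c.
set K := 1 + k0^-1.
set s := Num.sqrt K.
set a := a_const c k0 k1.
set H := Hconst k0 k1.
have hK : 0 < K by rewrite /K; have := invr_gt0 k0; rewrite hk0; lra.
have hs : 0 < s by rewrite sqrtr_gt0.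
have hVlt : forall k, kmin < k -> k <= 1 -> Vpot k < eta.
  by move=> k h1 h2; rewrite /eta -hkmin; apply: Vpot_decr.
have hV1 : Vpot k1 <= eta.
  case: (ltrgtP kmin k1) hk1 => // [h _|<- _]; first exact/ltW/hVlt/ltW.
  by rewrite hkmin.
have eH : eta - H = eta - Vpot k1 + K * (1 - k1) ^+ 2.
  by rewrite /H /Hconst -/K; ring.
have ha2 : a ^+ 2 = (eta - H) / K.
  rewrite /a /a_const -/eta -/H -/K sqr_sqrtr // divr_ge0 //; last exact: ltW.
  rewrite eH; apply: addr_ge0; first lra.
  apply: mulr_ge0; [exact: ltW | exact: sqr_ge0].
have ha0 : 0 <= a by apply: sqrtr_ge0.
have ha1 : (1 - k1) ^+ 2 <= a ^+ 2.
  rewrite ha2 ler_pdivlMr // eH; nra.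
have ha : 1 - k1 <= a by nra.
have hapos : 0 < a by lra.
have key : forall k, eta - Vbar k0 k1 k = K * (a ^+ 2 - (1 - k) ^+ 2).
  move=> k; rewrite ha2 /Vbar -/K -/H; field; lra.
pose f := fun k : R => 1 / Num.sqrt (eta - Vpot k).
pose g := fun k : R => 1 / Num.sqrt (K * (a ^+ 2 - (1 - k) ^+ 2)).
have fg : forall k, k1 < k -> k < k2 -> 0 < g k < f k.
  move=> k h1 h2.
  have e1 : 0 < eta - Vpot k by rewrite subr_gt0; apply: hVlt; lra.
  have e2 : eta - Vpot k < K * (a ^+ 2 - (1 - k) ^+ 2).
    rewrite -key ltrD2l ltrN2; apply: part1 => //; lra.
  have e3 : 0 < Num.sqrt (eta - Vpot k) by rewrite sqrtr_gt0.
  have e4 : Num.sqrt (eta - Vpot k) < Num.sqrt (K * (a ^+ 2 - (1 - k) ^+ 2)).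
    by rewrite ltr_sqrt //; lra.
  rewrite /f /g !div1r invr_gt0 ltf_pV2 ?posrE //; last lra.
  by rewrite e4 andbT; lra.
have mD : measurable (`]k1, k2[ : set R) by [].
have mf : measurable_fun `]k1, k2[ f.
  apply: open_continuous_measurable_fun; first exact: interval_open.
  move=> k; rewrite inE /= in_itv /= => /andP[h1 h2].
  apply: cont_inv_sqrt; first by apply: cont_etaV; lra.
  rewrite subr_gt0; apply: hVlt; lra.
have mg : measurable_fun `]k1, k2[ g.
  apply: open_continuous_measurable_fun; first exact: interval_open.
  move=> k; rewrite inE /= in_itv /= => /andP[h1 h2].
  apply: cont_inv_sqrt; first by apply: cont_quad.
  rewrite -key subr_gt0; apply: (lt_trans _ (hVlt k _ _)); try lra.
  apply: part1 => //; lra.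
have fgD : forall k, `]k1, k2[ k -> 0 < g k < f k.
  by move=> k; rewrite /= in_itv /= => /andP[h1 h2]; apply: fg.
have mh : measurable_fun `]k1, k2[ (fun k => f k - g k) by exact: measurable_funB.
have split : (\int[@lebesgue_measure R]_(k in `]k1, k2[) (f k)%:E =
   \int[@lebesgue_measure R]_(k in `]k1, k2[) (g k)%:E +
   \int[@lebesgue_measure R]_(k in `]k1, k2[) (f k - g k)%:E)%E.
  rewrite -ge0_integralD //.
  - by apply: eq_integral => k _; rewrite -EFinD addrC subrK.
  - by move=> k /fgD h; rewrite lee_fin; lra.
  - exact/measurable_EFinP.
  - by move=> k /fgD h; rewrite lee_fin; lra.
  - exact/measurable_EFinP.
have Ipos : (0 < \int[@lebesgue_measure R]_(k in `]k1, k2[) (f k - g k)%:E)%E.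
  rewrite lt0e integral_ge0 ?andbT; last by move=> k /fgD h; rewrite lee_fin; lra.
  apply/negP => /eqP h0.
  have : (\int[@lebesgue_measure R]_(k in `]k1, k2[) `|(f k - g k)%:E|)%E = 0%E.
    rewrite -h0; apply: eq_integral => k; rewrite inE => /fgD hk.
    by rewrite gee0_abs // lee_fin; lra.
  have mh' : measurable_fun `]k1, k2[ (fun k => (f k - g k)%:E) by exact/measurable_EFinP.
  move=> habs.
  have := (@ae_eq_integral_abs _ _ _ (@lebesgue_measure R) _ mD _ mh').1 habs.
  case=> A [mA muA sub].
  have DA : `]k1, k2[ `<=` A.
    move=> k Dk; apply: sub => /= /(_ Dk) /eqP; rewrite eqe.
    by have := fgD k Dk; lra.
  have mA' : measurable (A : set R) := mA.
  have muA' : (@lebesgue_measure R A = 0)%E := muA.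
  have h2 : (@lebesgue_measure R `]k1, k2[ = 0)%E :=
    @subset_measure0 _ _ _ (@lebesgue_measure R) _ _ mD mA' DA muA'.
  have hm : (@lebesgue_measure R `]k1, k2[ = (k2 - k1)%:E)%E.
    by rewrite lebesgue_measure_itv /= lte_fin hk12 /= -EFinB.
  move: h2; rewrite hm => /eqP; rewrite eqe; lra.
have Ilow : ((1 / s * (asin ((1 - k1) / a) - asin ((1 - k2) / a)))%:E <=
   \int[@lebesgue_measure R]_(k in `]k1, k2[) (g k)%:E)%E.
  have eK : K = s ^+ 2 by rewrite /s sqr_sqrtr //; exact: ltW.
  rewrite /g eK; exact: lower_bound.
have -> : (\int[@lebesgue_measure R]_(k in `]k1, k2[) (1 / Num.sqrt (eta_c c - Vpot k))%:E)%E =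
  (\int[@lebesgue_measure R]_(k in `]k1, k2[) (f k)%:E)%E by [].
rewrite split.
move: Ilow Ipos.
set X := (1 / s * _).
move: (\int[_]_(_ in _) (g _)%:E)%E (\int[_]_(_ in _) (f _ - g _)%:E)%E => [r| |] [t| |] //=.
- by rewrite -EFinD !lte_fin lee_fin => ? ?; lra.
- by move=> _ _; rewrite addey // ltry.
Qed.

Theorem mainTheorem8 (R : realType) (c kmin k0 k1 : R)
  (hc : 1 <= c)
  (hkmin_pos : 0 < kmin) (hkmin_le1 : kmin <= 1)
  (hkmin : Vpot kmin = eta_c c)
  (hkmin_uniq : forall k : R, 0 < k -> k <= 1 -> Vpot k = eta_c c -> k = kmin)
  (hk1 : kmin <= k1) (hk1' : k1 < 1)
  (hk0 : 0 < k0) (hk01 : k0 <= k1) :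
  (forall k : R, k1 < k < 1 -> Vbar k0 k1 k < Vpot k) /\
  (forall k2 : R, k1 < k2 <= 1 ->
     (((1 / Num.sqrt (1 + k0^-1)) *
        (asin ((1 - k1) / a_const c k0 k1) - asin ((1 - k2) / a_const c k0 k1)))%:E
     < (\int[@lebesgue_measure R]_(k in `]k1, k2[)
          (1 / Num.sqrt (eta_c c - Vpot k))%:E))%E) /\
  (k1 = kmin -> a_const c k0 k1 = 1 - kmin).
Proof.
split; [|split].
- by move=> k /andP[h1 h2]; apply: part1.
- by move=> k2 /andP[h1 h2]; exact: (@part2 R c kmin k0 k1 k2 hkmin_pos hkmin hk1 hk1' hk0 hk01 h1 h2).
- move=> e.
  have hK : 0 < 1 + k0^-1 by have := invr_gt0 k0; rewrite hk0; lra.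
  rewrite /a_const /Hconst e hkmin.
  set K := 1 + k0^-1.
  have -> : (eta_c c - (eta_c c - K * (kmin - 1) ^+ 2)) / K
    = (kmin - 1) ^+ 2 by field; exact: lt0r_neq0.
  rewrite sqrtr_sqr ler0_norm; first by rewrite opprB.
  rewrite -e; lra.
Qed.
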